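(* Suppose exclusion, random assignment and consistency hold, and let $\mathcal P$ be the induced observed law. Then for every $y'\in\{0,\dots,n-2\}$, every $j'\in[\ell]$ and every non-constant $(j_0,\dots,j_{n-1})\in([\ell]\setminus\{j'\})^n$, $$p_{y'1,j'}\le\sum_{j\in\{j_0,\dots,j_{n-1}\}}p_{y'1,j}+\sum_{y=0}^{n-1}p_{y0,j_y},$$ where the first sum runs over the set of distinct values among $j_0,\dots,j_{n-1}$. Moreover, none of these inequalities is implied by the others (for each one there is an observed law satisfying all the other inequalities of this family but violating it), and their total number is $(n-1)\ell\big((\ell-1)^n-(\ell-1)\big)$.
   Context: $D\in\{0,1\}$ treatment; $Y$ outcome with values $\gamma_0<\dots<\gamma_{n-1}$; instrument $Z$ with values in $[\ell]=\{0,\dots,\ell-1\}$, $\mathcal P(Z=z)>0$; $[n]=\{0,\dots,n-1\}$. Potential outcomes $Y^{(d,z)}$, potential treatments $D^{(z)}$. Exclusion: $Y^{(d,z)}=Y^{(d,z')}$ a.s. for all $z,z',d$ (written $Y^{(d)}$). Random assignment: $Z\perp(Y^{(0)},Y^{(1)},D^{(0)},\dots,D^{(\ell-1)})$. Consistency: $Y=(1-D)Y^{(0)}+DY^{(1)}$, $D=\sum_z\mathbb 1(Z=z)D^{(z)}$. $p_{yd,z}=\mathcal P(Y=\gamma_y,D=d\mid Z=z)$. A tuple is non-constant if not all entries are equal. *)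

(* Defs.v *)
From HB Require Import structures.
From mathcomp Require Import all_boot all_order all_algebra.
From mathcomp Require Import all_classical all_reals all_analysis.
Set Implicit Arguments. Unset Strict Implicit. Unset Printing Implicit Defensive.
Import Order.TTheory GRing.Theory Num.Theory.
Local Open Scope classical_set_scope.
Local Open Scope ring_scope.

(* Outcome values gamma_0 < ... < gamma_{n-1} are represented by their index
   in 'I_n; the instrument takes values in 'I_l; the treatment D is a bool
   (true = 1, false = 0). *)

Section IV.
Variables (R : realType) (n l : nat).
Variables (dsp : measure_display) (T : measurableType dsp) (P : probability T R).

Definition rv_meas {V : Type} (X : T -> V) : Prop :=
  forall v, measurable [set w | X w = v].

Definition indep_discrete {U V : Type} (X : T -> U) (W : T -> V) : Prop :=
  forall u v, P [set w | X w = u /\ W w = v] =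
              (P [set w | X w = u] * P [set w | W w = v])%E.

(* The structural IV model, with
   Ydz d z = Y^(d,z), Yd d = Y^(d), Dz z = D^(z). *)
Definition iv_model (Ydz : bool -> 'I_l -> T -> 'I_n) (Yd : bool -> T -> 'I_n)
  (Dz : 'I_l -> T -> bool) (Z : T -> 'I_l) (Y : T -> 'I_n) (D : T -> bool) : Prop :=
  ((forall d z, rv_meas (Ydz d z)) /\ (forall d, rv_meas (Yd d)) /\
      (forall z, rv_meas (Dz z)) /\ rv_meas Z) /\
      (forall z, (0 < P [set w | Z w = z])%E) /\
      (* exclusion: Y^(d,z) = Y^(d) almost surely, for all d, z *)
      (forall d z, P [set w | Ydz d z w <> Yd d w] = 0%E) /\
      (* random assignment: Z independent of (Y^(0), Y^(1), D^(0), ..., D^(l-1)) *)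
      indep_discrete Z (fun w => (Yd false w, Yd true w, [ffun z => Dz z w])) /\
      (* consistency *)
      (forall w, Y w = if D w then Yd true w else Yd false w) /\
      (forall w, D w = Dz (Z w) w).

Definition obs_law (Y : T -> 'I_n) (D : T -> bool) (Z : T -> 'I_l)
  (y : 'I_n) (d : bool) (z : 'I_l) : R :=
  fine (P [set w | Y w = y /\ D w = d /\ Z w = z]) / fine (P [set w | Z w = z]).

End IV.

Definition is_obs_law (R : realType) (n l : nat) (p : 'I_n -> bool -> 'I_l -> R) : Prop :=
  (forall y d z, 0 <= p y d z) /\
  (forall z, \sum_(y < n) \sum_(d : bool) p y d z = 1).

Definition ineq_index (n l : nat) : {set 'I_n * 'I_l * n.-tuple 'I_l} :=
  [set t : 'I_n * 'I_l * n.-tuple 'I_l | [&& (t.1.1 < n.-1)%N, t.1.2 \notin t.2 & ~~ constant t.2]].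

Definition ineq_holds (R : realType) (n l : nat) (p : 'I_n -> bool -> 'I_l -> R)
  (t : 'I_n * 'I_l * n.-tuple 'I_l) : Prop :=
  let: (y', j', J) := t in
  p y' true j' <= \sum_(j : 'I_l | j \in J) p y' true j
                  + \sum_(y < n) p y false (tnth J y).

(* Main.v *)
Require Import Defs.
From HB Require Import structures.
From mathcomp Require Import all_boot all_order all_algebra.
From mathcomp Require Import all_classical all_reals all_analysis.
Import Order.TTheory GRing.Theory Num.Theory.

Module CntM.
Lemma card_avoid n l (j : 'I_l) :
  #|[pred J : n.-tuple 'I_l | j \notin J]| = (l.-1)^n.
Proof.
have bij : {on [pred J : n.-tuple 'I_l | j \notin J], bijective (@tuple_of_finfun _ n)}.
  apply: onW_bij; exact: (Bijective (@tuple_of_finfunK _ _) (@finfun_of_tupleK _ _)).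
rewrite -(on_card_preimset bij).
rewrite -[in RHS](card_ord n) -[l in RHS](card_ord l) -(cardC1 j) -(card_ffun_on _ (predC1 j)).
apply: eq_card => f; rewrite inE /=.
apply/idP/ffun_onP => /= [H x|H].
  apply/negP => /eqP E; move/negP: H; apply; rewrite -E.
  by apply/tnthP; exists x; rewrite tnth_mktuple.
apply/tnthP => -[x]; rewrite tnth_mktuple => E.
by move: (H x); rewrite inE -E eqxx.
Qed.

Lemma card_avoid_const n l (j : 'I_l) : (0 < n)%N ->
  #|[pred J : n.-tuple 'I_l | (j \notin J) && constant J]| = l.-1.
Proof.
move=> n0.
pose g (z : 'I_l) : n.-tuple 'I_l := [tuple of nseq n z].
have ginj : injective g.
  move=> a b /(congr1 (fun J : n.-tuple 'I_l => tnth J (Ordinal n0))).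
  by rewrite /g !(tnth_nth a) /= !nth_nseq n0.
rewrite -[l in RHS](card_ord l) -(cardC1 j) -(card_imset (predC1 j) ginj).
apply: eq_card => J; rewrite inE /=.
apply/idP/idP.
  case/andP => jJ cJ.
  move/(constantP j): cJ => [x Ex].
  apply/imsetP; exists x.
    rewrite inE; apply/eqP => xj; move/negP: jJ; apply.
    have H : x \in tval J by rewrite Ex mem_nseq size_tuple n0 eqxx.
    by rewrite -xj.
  by apply: val_inj; rewrite /= Ex size_tuple.
case/imsetP => z; rewrite inE => zj ->.
rewrite constant_nseq andbT mem_nseq n0 /= eq_sym; exact: zj.
Qed.

Lemma sum_b (T : finType) (b : pred T) : (\sum_(x : T) (b x : nat) = #|b|)%N.
Proof. by rewrite -sum1_card [in RHS]big_mkcond; apply: eq_bigr => x _; rewrite unfold_in; case: (b x). Qed.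

Lemma card_nc n l (j : 'I_l) : (0 < n)%N ->
  #|[pred J : n.-tuple 'I_l | (j \notin J) && ~~ constant J]| = ((l - 1)^n - (l - 1))%N.
Proof.
move=> n0.
have := cardID (fun J : n.-tuple 'I_l => constant J) [pred J : n.-tuple 'I_l | j \notin J].
rewrite card_avoid.
have -> : #|[predI [pred J : n.-tuple 'I_l | j \notin J] & (fun J : n.-tuple 'I_l => constant J)]| = l.-1.
  rewrite -(@card_avoid_const n l j n0); apply: eq_card => J; by rewrite !inE.
have -> : #|[predD [pred J : n.-tuple 'I_l | j \notin J] & (fun J : n.-tuple 'I_l => constant J)]|
   = #|[pred J : n.-tuple 'I_l | (j \notin J) && ~~ constant J]|.
  apply: eq_card => J; by rewrite !inE andbC.
rewrite subn1 => <-; by rewrite addKn.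
Qed.

End CntM.
Import CntM.

Local Open Scope classical_set_scope.
Local Open Scope ring_scope.

Module VM.
Set Implicit Arguments. Unset Strict Implicit. Unset Printing Implicit Defensive.



Section Valid.
Variables (R : realType) (n l : nat) (dsp : measure_display) (T : measurableType dsp)
  (P : probability T R) (Yd : bool -> T -> 'I_n) (Dz : 'I_l -> T -> bool).
Hypothesis mYd : forall d, rv_meas (Yd d).
Hypothesis mDz : forall z, rv_meas (Dz z).

Definition VV := ('I_n * 'I_n * {ffun 'I_l -> bool})%type.
Definition WW (w : T) : VV := (Yd false w, Yd true w, [ffun z => Dz z w]).

Lemma mW v : measurable [set w | WW w = v].
Proof.
have -> : [set w | WW w = v] = [set w | Yd false w = v.1.1] `&` [set w | Yd true w = v.1.2]
   `&` \bigcap_(z in [set: 'I_l]) [set w | Dz z w = v.2 z].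
  apply/seteqP; split => w /=.
  - by move=> <-; split; [split|] => // z _ /=; rewrite ffunE.
  - case: v => [[a b] f] /= [[<- <-] Hf]; rewrite /WW; congr (_, _, _).
    by apply/ffunP => z; rewrite ffunE; exact: Hf.
apply: measurableI; [apply: measurableI|]; [exact: mYd|exact: mYd|].
by apply: fin_bigcap_measurable => // z _; exact: mDz.
Qed.

Lemma mWs (s : seq VV) : measurable [set w | WW w \in s].
Proof.
elim: s => [|v s IH].
  by have -> : [set w | WW w \in [::]] = set0 by apply/seteqP; split => w.
have -> : [set w | WW w \in v :: s] = [set w | WW w = v] `|` [set w | WW w \in s].
  apply/seteqP; split => w /=.
  - by rewrite in_cons => /orP [/eqP ->|H]; [left|right].
  - by case=> [->|H]; rewrite in_cons ?eqxx // H orbT.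
exact: measurableU (mW v) IH.
Qed.

Lemma sumW (E : set T) (s : seq VV) : measurable E -> uniq s ->
  P (E `&` [set w | WW w \in s]) = (\sum_(v <- s) P (E `&` [set w | WW w = v]))%E.
Proof.
move=> mE; elim: s => [|v s IH].
  rewrite big_nil => _.
  by have -> : E `&` [set w | WW w \in [::]] = set0 by apply/seteqP; split => w // [].
rewrite cons_uniq => /andP [vs us]; rewrite big_cons -IH //.
have -> : E `&` [set w | WW w \in v :: s] =
   (E `&` [set w | WW w = v]) `|` (E `&` [set w | WW w \in s]).
  rewrite -setIUr; congr (_ `&` _); apply/seteqP; split => w /=.
  - by rewrite in_cons => /orP [/eqP ->|H]; [left|right].
  - by case=> [->|H]; rewrite in_cons ?eqxx // H orbT.
apply: measureU; [exact: measurableI (mW v)|exact: measurableI (mWs s)|].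
apply/seteqP; split => w // [[_ /= E1] [_ /= E2]].
by move: vs; rewrite -E1 E2.
Qed.

End Valid.

Lemma validity (R : realType) (n l : nat) (dsp : measure_display) (T : measurableType dsp)
  (P : probability T R) (Ydz : bool -> 'I_l -> T -> 'I_n) (Yd : bool -> T -> 'I_n)
  (Dz : 'I_l -> T -> bool) (Z : T -> 'I_l) (Y : T -> 'I_n) (D : T -> bool) :
  iv_model P Ydz Yd Dz Z Y D ->
  forall t, t \in ineq_index n l -> ineq_holds (obs_law P Y D Z) t.
Proof.
case=> [[_ [mYd [mDz mZ]]] [Zpos [_ [ind [HY HD]]]]].
pose pi v := fine (P [set w | WW Yd Dz w = v]).
have pi_ge0 v : 0 <= pi v by apply: fine_ge0.
pose S (y : 'I_n) (d : bool) (z : 'I_l) : pred (VV n l) :=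
  fun v => ((if d then v.1.2 else v.1.1) == y) && (v.2 z == d).
have key y d z : obs_law P Y D Z y d z = \sum_(v | S y d z v) pi v.
  rewrite /obs_law.
  have mZz : measurable [set w | Z w = z] by exact: mZ.
  have finZ := fin_num_measure P _ mZz.
  have pz0 : 0 < fine (P [set w | Z w = z]) by rewrite -lte_fin fineK //; exact: Zpos.
  have -> : [set w | Y w = y /\ D w = d /\ Z w = z] =
      [set w | Z w = z] `&` [set w | WW Yd Dz w \in enum (S y d z)].
    apply/seteqP; split => w /=; rewrite mem_enum /S /WW unfold_in /= ?ffunE.
    - by move=> [Yw [Dw Zw]]; split => //; rewrite -Yw -Dw HY HD Zw !eqxx.
    - by case=> Zw /andP [/eqP Yw /eqP Dw]; rewrite HY HD Zw Dw.
  rewrite sumW //; last exact: enum_uniq.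
  rewrite big_enum /=.
  have indv v : P ([set w | Z w = z] `&` [set w | WW Yd Dz w = v]) =
      (P [set w | Z w = z] * P [set w | WW Yd Dz w = v])%E by exact: ind.
  under eq_bigr => v _ do rewrite indv -(fineK finZ) -(fineK (fin_num_measure P _ (mW mYd mDz v))) -EFinM.
  rewrite sumEFin /= -big_distrr /= mulrC mulKf //.
  by rewrite gt_eqF.
case=> [[y' j'] J]; rewrite inE /= => /and3P [_ hj _].
rewrite /ineq_holds key.
under eq_bigr => j _ do rewrite key.
under [X in _ + X]eq_bigr => y _ do rewrite key.
rewrite [X in X <= _]big_mkcond /=.
under [X in _ <= X + _]eq_bigr => j _ do rewrite big_mkcond /=.
under [X in _ + X]eq_bigr => y _ do rewrite big_mkcond /=.
rewrite [X in _ <= X + _]exchange_big [X in _ <= _ + X]exchange_big /= -big_split /=.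
apply: ler_sum => v _.
have nn (b : bool) : 0 <= (if b then pi v else 0) by case: b.
case Sv: (S y' true j' v); last by apply: addr_ge0; apply: sumr_ge0 => *.
move: Sv nn; case: v => [[a b] f]; move=> Sv nn; move: Sv; rewrite /S /= => /andP [/eqP Eb /eqP Ef].
case: (boolP [exists j, (j \in J) && f j]).
  case/existsP => j /andP [jJ fj].
  rewrite -[X in X <= _]addr0; apply: lerD; last by apply: sumr_ge0 => *.
  rewrite (bigD1 j) //= Eb fj !eqxx /= lerDl; apply: sumr_ge0 => *; case: ifP => _ //; exact: pi_ge0.
rewrite negb_exists => /forallP Hf.
rewrite -[X in X <= _]add0r; apply: lerD; first by apply: sumr_ge0 => *.
have fa : f (tnth J a) = false.
  by have := Hf (tnth J a); rewrite mem_tnth /= => /negbTE.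
rewrite (bigD1 a) //= fa !eqxx /= lerDl; apply: sumr_ge0 => *; case: ifP => _ //; exact: pi_ge0.
Qed.

End VM.
Import VM.


Lemma card_index n l : #|ineq_index n l| = ((n - 1) * l * ((l - 1) ^ n - (l - 1)))%N.
Proof.
case: n => [|m].
  rewrite sub0n !mul0n; apply/eqP; rewrite cards_eq0; apply/eqP/setP => -[[y ?] ?].
  by case: y.
transitivity (\sum_(i : 'I_m.+1) \sum_(j : 'I_l) \sum_(J : (m.+1).-tuple 'I_l)
   ((i < m)%N && ((j \notin J) && ~~ constant J) : nat))%N.
  rewrite pair_bigA pair_bigA /= -sum1_card big_mkcond /=; apply: eq_bigr => t _.
  by rewrite !inE /=; case: (_ && _).
have E (i : 'I_m.+1) (j : 'I_l) : (\sum_(J : (m.+1).-tuple 'I_l) ((i < m)%N && ((j \notin J) && ~~ constant J) : nat)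
   = ((i < m)%N : nat) * ((l - 1) ^ m.+1 - (l - 1)))%N.
  case: (i < m)%N => /=; last by rewrite mul0n big1.
  by rewrite mul1n -(@card_nc _ _ j) // -sum_b.
under eq_bigr => i _ do under eq_bigr => j _ do rewrite E.
under eq_bigr => i _ do rewrite sum_nat_const card_ord.
under eq_bigr => i _ do rewrite mulnCA.
rewrite -big_distrl /= big_ord_recr /= ltnn addn0.
rewrite (eq_bigr (fun _ => 1%N)); last by move=> i _; rewrite ltn_ord.
rewrite sum_nat_const card_ord muln1 subn1 /=.
by rewrite subn1 /= mulnA.
Qed.


Section Irred.
Variables (R : realType) (n l : nat) (y' : 'I_n) (j' : 'I_l) (J : n.-tuple 'I_l).
Hypothesis hj : j' \notin J.
Hypothesis hc : ~~ constant J.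

Let k (z : 'I_l) : nat := #|[pred y : 'I_n | tnth J y != z]|.

Definition pw (y : 'I_n) (d : bool) (z : 'I_l) : R :=
  if z == j' then (if d then (y == y')%:R else (y != y')%:R) / n%:R
  else (if d then 0 else (tnth J y != z)%:R / (k z)%:R).

Lemma n_gt0 : (0 < n)%N. Proof. by case: y' => y /= /(leq_ltn_trans (leq0n y)). Qed.

Lemma k_gt0 z : (0 < k z)%N.
Proof.
rewrite lt0n; apply/negP => /eqP /card0_eq H; move/negP: hc; apply.
have -> : tval J = nseq (size J) z.
  apply/all_pred1P/allP => x /tnthP [y ->].
  by have := H y; rewrite !inE => /negbFE.
exact: constant_nseq.
Qed.

Lemma k_le z : (k z <= n)%N.
Proof. by rewrite /k -[n in (_ <= n)%N]card_ord max_card. Qed.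

Lemma pw_ge0 y d z : 0 <= pw y d z.
Proof. by rewrite /pw; case: ifP => _; case: d => //; rewrite divr_ge0 ?ler0n. Qed.

Lemma pw_law : is_obs_law pw.
Proof.
split; first exact: pw_ge0.
move=> z; rewrite (eq_bigr (fun y => pw y true z + pw y false z)); last by move=> y _; rewrite big_bool.
rewrite /pw; case: (z == j').
  have E1 (y : 'I_n) : (y == y')%:R + (y != y')%:R = 1 :> R by case: eqP => _ /=; rewrite ?addr0 ?add0r.
  under eq_bigr => y _ do rewrite -mulrDl E1.
  rewrite sumr_const card_ord div1r -[_ *+ n]mulr_natr mulVf //.
  by rewrite pnatr_eq0 -lt0n n_gt0.
under eq_bigr => y _ do rewrite add0r.
rewrite -mulr_suml -natr_sum sum_b mulfV //.
by rewrite pnatr_eq0 -lt0n k_gt0.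
Qed.

Lemma pw_viol : ~ ineq_holds pw (y', j', J).
Proof.
rewrite /ineq_holds /pw eqxx eqxx /= => H.
have : (0 : R) < 1 / n%:R by rewrite divr_gt0 // ltr0n n_gt0.
rewrite mul1r in H |- *; rewrite ltNge; move/negP; apply; apply: le_trans H _.
rewrite big1 ?add0r.
  rewrite big1 // => y _.
  have -> : (tnth J y == j') = false.
    by apply/negP => /eqP E; move/negP: hj; apply; rewrite -E mem_tnth.
  by rewrite eqxx mul0r.
move=> j jJ; have -> : (j == j') = false.
  by apply/negP => /eqP E; move/negP: hj; apply; rewrite -E.
by [].
Qed.

Lemma pw_others t : t \in ineq_index n l -> t <> (y', j', J) -> ineq_holds pw t.
Proof.
case: t => [[y2 j2] J2]; rewrite inE /= => /and3P [_ hj2 _] hne.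
rewrite /ineq_holds.
have R0 : 0 <= \sum_(j : 'I_l | j \in J2) pw y2 true j + \sum_(y < n) pw y false (tnth J2 y).
  by apply: addr_ge0; apply: sumr_ge0 => *; exact: pw_ge0.
have [Ej|Nj] := eqVneq j2 j'; last by rewrite {1}/pw (negbTE Nj).
subst j2.
have [Ey|Ny] := eqVneq y2 y'; last by rewrite {1}/pw eqxx (negbTE Ny) mul0r.
subst y2.
have [y Hy] : exists y, tnth J2 y != tnth J y.
  case: (boolP [exists y, tnth J2 y != tnth J y]) => [/existsP //|].
  rewrite negb_exists => /forallP H; exfalso; apply: hne; congr (_, _).
  by apply: eq_from_tnth => y; apply/eqP; rewrite -[_ == _]negbK H.
rewrite {1}/pw !eqxx mul1r.
apply: le_trans (_ : pw y false (tnth J2 y) <= _).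
  rewrite /pw.
  have -> : (tnth J2 y == j') = false.
    by apply/negP => /eqP E; move/negP: hj2; apply; rewrite -E mem_tnth.
  rewrite eq_sym Hy mul1r lef_pV2 ?ler_nat; [exact: k_le| |].
    rewrite posrE ltr0n; exact: n_gt0.
  rewrite posrE ltr0n; exact: k_gt0.
apply: le_trans (_ : \sum_(y0 < n) pw y0 false (tnth J2 y0) <= _).
  rewrite (bigD1 y) //= lerDl; apply: sumr_ge0 => *; exact: pw_ge0.
by rewrite lerDr; apply: sumr_ge0 => *; exact: pw_ge0.
Qed.

End Irred.

Theorem theorem6 (R : realType) (n l : nat) :
  (* validity: every observed law induced by the IV model satisfies the family *)
  (forall (dsp : measure_display) (T : measurableType dsp) (P : probability T R)
          (Ydz : bool -> 'I_l -> T -> 'I_n) (Yd : bool -> T -> 'I_n)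
          (Dz : 'I_l -> T -> bool) (Z : T -> 'I_l) (Y : T -> 'I_n) (D : T -> bool),
      iv_model P Ydz Yd Dz Z Y D ->
      forall t, t \in ineq_index n l -> ineq_holds (obs_law P Y D Z) t) /\
  (* irredundancy: each inequality can be violated while all others hold *)
  (forall t, t \in ineq_index n l ->
     exists p : 'I_n -> bool -> 'I_l -> R,
       [/\ is_obs_law p, ~ ineq_holds p t &
           forall t', t' \in ineq_index n l -> t' <> t -> ineq_holds p t']) /\
  (* number of inequalities *)
  #|ineq_index n l| = ((n - 1) * l * ((l - 1) ^ n - (l - 1)))%N.
Proof.
split; first exact: validity.
split; last exact: card_index.
case=> [[y' j'] J] ht.
have := ht; rewrite inE /= => /and3P [_ hj hc].
exists (@pw R n l y' j' J); split.
- by apply: pw_law.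
- by apply: pw_viol.
- by move=> t' ht' hne; apply: pw_others.
Qed.
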